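(* For every integer $n\ge 1$, $$\Phi^{(2)}[aq^n; b, b'; c, c'; x, y] = \Phi^{(2)}[a; b, b'; c, c'; x, y] + \frac{ax(1-b)}{1-c} \sum_{k=1}^n q^{k-1} \Phi^{(2)}[aq^k; bq, b'; cq, c'; x, y] + \frac{ay(1-b')}{1-c'} \sum_{k=1}^n q^{k-1} \Phi^{(2)}[aq^k; b, b'q; c, c'q; xq, y]$$ and $$\Phi^{(2)}[aq^{-n}; b, b'; c, c'; x, y] = \Phi^{(2)}[a; b, b'; c, c'; x, y] - \frac{ax(1-b)}{1-c} \sum_{k=1}^n q^{-k} \Phi^{(2)}[aq^{1-k}; bq, b'; cq, c'; x, y] - \frac{ay(1-b')}{1-c'} \sum_{k=1}^n q^{-k} \Phi^{(2)}[aq^{1-k}; b, b'q; c, c'q; xq, y].$$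
   Context: Let $q$ be a complex number with $0<|q|<1$. For complex $z$ and integer $m\ge 0$, $(z;q)_m=\prod_{j=0}^{m-1}(1-zq^j)$, with $(z;q)_0=1$. The $q$-Appell function $\Phi^{(2)}$ is $$\Phi^{(2)}[a; b, b'; c, c'; x, y] = \sum_{m, n \geq 0} \frac{(a; q)_{m+n} (b; q)_m (b'; q)_n}{(q; q)_m (q; q)_n (c; q)_m (c'; q)_n} x^m y^n.$$ Identities are understood as identities of power series in $x,y$ (formal, or convergent for small $|x|,|y|$), with complex parameters chosen so that no denominator occurring vanishes. *)

(* Defs.v *)
From mathcomp Require Import all_boot all_order all_algebra.
From mathcomp Require Import reals.
From mathcomp Require Export complex.
Set Implicit Arguments. Unset Strict Implicit. Unset Printing Implicit Defensive.
Import Order.TTheory GRing.Theory Num.Theory.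
Local Open Scope ring_scope.

Section Defs.
Variable C : comUnitRingType.

Definition qpoch (z q : C) (m : nat) : C := \prod_(j < m) (1 - z * q ^+ j).

(* Formal double power series in x, y: coefficient of x^m y^n. *)
Definition fps := nat -> nat -> C.

Definition fps_add (F G : fps) : fps := fun m n => F m n + G m n.
Definition fps_sub (F G : fps) : fps := fun m n => F m n - G m n.
Definition fps_scale (s : C) (F : fps) : fps := fun m n => s * F m n.
Definition fps_mulX (F : fps) : fps :=
  fun m n => if m is m'.+1 then F m' n else 0.
Definition fps_sum1 (N : nat) (F : nat -> fps) : fps :=
  fun m n => \sum_(1 <= k < N.+1) F k m n.
Definition fps_mulY (F : fps) : fps :=
  fun m n => if n is n'.+1 then F m n' else 0.

(* q-Appell function Phi^(2)[a; b, b'; c, c'; sx * x, sy * y] as a formal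
   power series in x, y (sx, sy are scalars multiplying the variables;
   Phi^(2)[...; x, y] is Phi2 ... 1 1 and Phi^(2)[...; xq, y] is Phi2 ... q 1). *)
Definition Phi2 (q a b b' c c' sx sy : C) : fps :=
  fun m n => qpoch a q (m + n) * qpoch b q m * qpoch b' q n
             / (qpoch q q m * qpoch q q n * qpoch c q m * qpoch c' q n)
             * sx ^+ m * sy ^+ n.
End Defs.

(* Main.v *)
Require Import Defs.
From mathcomp Require Import all_boot all_order all_algebra.
From mathcomp Require Import reals complex.
From mathcomp Require Import ring.
From Stdlib Require Import FunctionalExtensionality.
Import Order.TTheory GRing.Theory Num.Theory.
Local Open Scope ring_scope.

Section H.
Variable F : fieldType.

Lemma qpochS (z q : F) m : qpoch z q m.+1 = (1 - z) * qpoch (z * q) q m.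
Proof.
rewrite /qpoch big_ord_recl expr0 mulr1; congr (_ * _).
by apply: eq_bigr => i _; rewrite /= exprS mulrA.
Qed.

Lemma qpochSr (z q : F) m : qpoch z q m.+1 = qpoch z q m * (1 - z * q ^+ m).
Proof. by rewrite /qpoch big_ord_recr. Qed.

Lemma qpoch0 (z q : F) : qpoch z q 0 = 1.
Proof. by rewrite /qpoch big_ord0. Qed.

Lemma qpoch_neq0 (z q : F) m : (forall j, z * q ^+ j != 1) -> qpoch z q m != 0.
Proof.
move=> h; rewrite /qpoch; apply/prodf_neq0 => i _.
by rewrite subr_eq0 eq_sym.
Qed.

Lemma step (q a b b' c c' : F) : q != 0 -> (forall j, q ^+ j.+1 != 1) ->
  (forall j, c * q ^+ j != 1) -> (forall j, c' * q ^+ j != 1) -> forall m n,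
  Phi2 q (a*q) b b' c c' 1 1 m n = Phi2 q a b b' c c' 1 1 m n
   + a*(1-b)/(1-c) * (if m is m'.+1 then Phi2 q (a*q) (b*q) b' (c*q) c' 1 1 m' n else 0)
   + a*(1-b')/(1-c') * (if n is n'.+1 then Phi2 q (a*q) b (b'*q) c (c'*q) q 1 m n' else 0).
Proof.
move=> q0 hq hc hc' m n.
have hqq : forall k, qpoch q q k != 0.
  by move=> k; apply: qpoch_neq0 => j; rewrite -exprS.
have hcq : forall k, qpoch (c*q) q k != 0.
  by move=> k; apply: qpoch_neq0 => j; rewrite -mulrA -exprS.
have hcq' : forall k, qpoch (c'*q) q k != 0.
  by move=> k; apply: qpoch_neq0 => j; rewrite -mulrA -exprS.
have c1 : 1 - c != 0 by rewrite subr_eq0 eq_sym -[c]mulr1 -(expr0 q).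
have c1' : 1 - c' != 0 by rewrite subr_eq0 eq_sym -[c']mulr1 -(expr0 q).
have hqm : forall k, 1 - q ^+ k.+1 != 0 by move=> k; rewrite subr_eq0 eq_sym.
rewrite /Phi2 !expr1n !mulr1.
have hq1 : forall k, 1 - q * q ^+ k != 0 by move=> k; rewrite -exprS.

case: m => [|m]; case: n => [|n].
- rewrite !qpoch0; field; rewrite ?c1 ?c1' ?oner_eq0 //.
- rewrite !add0n !qpoch0 expr0 !expr1n.
  rewrite (qpochSr (a*q) q n) (qpochS a q n) (qpochS b' q n) (qpochSr q q n) (qpochS c' q n).
  field; rewrite ?c1 ?c1' ?hq1 ?hqq ?hcq ?hcq' ?q0 ?oner_eq0 //.
- rewrite !addn0 !qpoch0 !expr1n.
  rewrite (qpochSr (a*q) q m) (qpochS a q m) (qpochS b q m) (qpochSr q q m) (qpochS c q m).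
  field; rewrite ?c1 ?c1' ?hq1 ?hqq ?hcq ?hcq' ?q0 ?oner_eq0 //.
- rewrite !addSn !addnS !expr1n.
  rewrite (qpochSr (a*q) q (m+n).+1) (qpochS a q (m+n).+1) (qpochS b q m) (qpochSr q q m) (qpochS c q m).
  rewrite (qpochS b' q n) (qpochSr q q n) (qpochS c' q n).
  rewrite !exprS exprD.
  field; rewrite ?c1 ?c1' ?hq1 ?hqq ?hcq ?hcq' ?q0 ?oner_eq0 //.
Qed.

Lemma elim4 (x y z w g : F) : x = y + z + w -> x - z - w = g -> y = g.
Proof. by move=> -> <-; ring. Qed.

Lemma part1 (q a b b' c c' : F) : q != 0 -> (forall j, q ^+ j.+1 != 1) ->
  (forall j, c * q ^+ j != 1) -> (forall j, c' * q ^+ j != 1) -> forall n,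
  Phi2 q (a * q ^+ n) b b' c c' 1 1 =
    fps_add (fps_add (Phi2 q a b b' c c' 1 1)
      (fps_scale (a * (1 - b) / (1 - c))
        (fps_mulX (fps_sum1 n (fun k =>
           fps_scale (q ^+ (k - 1)) (Phi2 q (a * q ^+ k) (b * q) b' (c * q) c' 1 1))))))
      (fps_scale (a * (1 - b') / (1 - c'))
        (fps_mulY (fps_sum1 n (fun k =>
           fps_scale (q ^+ (k - 1)) (Phi2 q (a * q ^+ k) b (b' * q) c (c' * q) q 1))))).
Proof.
move=> q0 hq hc hc' n.
apply: functional_extensionality => m0; apply: functional_extensionality => n0.
rewrite /fps_add /fps_scale /fps_mulX /fps_mulY /fps_sum1.
elim: n m0 n0 => [|N IH] m0 n0.
  by rewrite expr0 mulr1; case: m0 => [|m0]; case: n0 => [|n0] /=;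
    rewrite ?big_geq //; ring.
have e : a * q ^+ N * q = a * q ^+ N.+1 by rewrite exprSr mulrA.
have := step q (a * q ^+ N) b b' c c' q0 hq hc hc' m0 n0.
rewrite e IH => ->.
case: m0 => [|m0]; case: n0 => [|n0] /=; rewrite ?(big_nat_recr N.+1) //= ?subn1 /=; ring.
Qed.

Lemma part2 (q a b b' c c' : F) : q != 0 -> (forall j, q ^+ j.+1 != 1) ->
  (forall j, c * q ^+ j != 1) -> (forall j, c' * q ^+ j != 1) -> forall n,
  Phi2 q (a * q ^- n) b b' c c' 1 1 =
    fps_sub (fps_sub (Phi2 q a b b' c c' 1 1)
      (fps_scale (a * (1 - b) / (1 - c))
        (fps_mulX (fps_sum1 n (fun k =>
           fps_scale (q ^- k) (Phi2 q (a * q ^- (k - 1)) (b * q) b' (c * q) c' 1 1))))))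
      (fps_scale (a * (1 - b') / (1 - c'))
        (fps_mulY (fps_sum1 n (fun k =>
           fps_scale (q ^- k) (Phi2 q (a * q ^- (k - 1)) b (b' * q) c (c' * q) q 1))))).
Proof.
move=> q0 hq hc hc' n.
apply: functional_extensionality => m0; apply: functional_extensionality => n0.
rewrite /fps_sub /fps_scale /fps_mulX /fps_mulY /fps_sum1.
elim: n m0 n0 => [|N IH] m0 n0.
  by rewrite expr0 invr1 mulr1; case: m0 => [|m0]; case: n0 => [|n0] /=;
    rewrite ?big_geq //; ring.
have e : a * q ^- N.+1 * q = a * q ^- N.
  by rewrite exprS invfM -mulrA mulrAC mulVf ?mul1r ?expf_neq0.
have := step q (a * q ^- N.+1) b b' c c' q0 hq hc hc' m0 n0.
rewrite e => /elim4; apply; rewrite IH.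
case: m0 => [|m0]; case: n0 => [|n0] /=; rewrite ?(big_nat_recr N.+1) //= ?subn1 /=; ring.
Qed.
End H.


Theorem theorem6 (R : realType) (q a b b' c c' : R[i])
  (hq0 : 0 < `|q|) (hq1 : `|q| < 1)
  (hc : forall j : nat, c * q ^+ j != 1)
  (hc' : forall j : nat, c' * q ^+ j != 1)
  (n : nat) (hn : (1 <= n)%N) :
  Phi2 q (a * q ^+ n) b b' c c' 1 1 =
    fps_add (fps_add (Phi2 q a b b' c c' 1 1)
      (fps_scale (a * (1 - b) / (1 - c))
        (fps_mulX (fps_sum1 n (fun k =>
           fps_scale (q ^+ (k - 1)) (Phi2 q (a * q ^+ k) (b * q) b' (c * q) c' 1 1))))))
      (fps_scale (a * (1 - b') / (1 - c'))
        (fps_mulY (fps_sum1 n (fun k =>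
           fps_scale (q ^+ (k - 1)) (Phi2 q (a * q ^+ k) b (b' * q) c (c' * q) q 1)))))
  /\
  Phi2 q (a * q ^- n) b b' c c' 1 1 =
    fps_sub (fps_sub (Phi2 q a b b' c c' 1 1)
      (fps_scale (a * (1 - b) / (1 - c))
        (fps_mulX (fps_sum1 n (fun k =>
           fps_scale (q ^- k) (Phi2 q (a * q ^- (k - 1)) (b * q) b' (c * q) c' 1 1))))))
      (fps_scale (a * (1 - b') / (1 - c'))
        (fps_mulY (fps_sum1 n (fun k =>
           fps_scale (q ^- k) (Phi2 q (a * q ^- (k - 1)) b (b' * q) c (c' * q) q 1))))).
Proof.
have q0 : q != 0 by rewrite -normr_gt0.
have hq : forall j, q ^+ j.+1 != 1.
  move=> j; apply/eqP => h.
  have : `|q ^+ j.+1| < 1 by rewrite normrX exprn_ilt1.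
  by rewrite h normr1 ltxx.
split; [exact: part1 | exact: part2].
Qed.
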